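(* Let $R$ be a $*$-reducing ring and let $p,q\in R$ be projections. Then the following are equivalent: (1) $pq-qp$ is MP invertible; (2) $pq$ and $p-q$ are both MP invertible.
   Context: $R$ is an associative ring with identity $1$ and an involution $a\mapsto a^*$ (satisfying $(a^* )^*=a$, $(a+b)^*=a^*+b^*$, $(ab)^*=b^*a^*$). $R$ is $*$-reducing if $a^*a=0$ implies $a=0$ for all $a\in R$. An element $a$ is MP invertible if there is $b$ with $aba=a$, $bab=b$, $(ab)^*=ab$, $(ba)^*=ba$. A projection is an element $p$ with $p^2=p=p^*$. *)

(* Defs.v *)
From mathcomp Require Import all_boot all_algebra.
Set Implicit Arguments. Unset Strict Implicit. Unset Printing Implicit Defensive.
Import GRing.Theory.
Local Open Scope ring_scope.

Definition is_involution (R : pzRingType) (star : R -> R) : Prop :=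
  [/\ forall a, star (star a) = a,
      forall a b, star (a + b) = star a + star b
    & forall a b, star (a * b) = star b * star a].

Definition star_reducing (R : pzRingType) (star : R -> R) : Prop :=
  forall a : R, star a * a = 0 -> a = 0.

Definition MP_invertible (R : pzRingType) (star : R -> R) (a : R) : Prop :=
  exists b : R, [/\ a * b * a = a, b * a * b = b,
                    star (a * b) = a * b & star (b * a) = b * a].

Definition projection (R : pzRingType) (star : R -> R) (p : R) : Prop :=
  p * p = p /\ star p = p.

(* Main.v *)
Require Import Defs.
From mathcomp Require Import all_boot all_algebra.
Local Open Scope ring_scope.
Import GRing.Theory.
Set Implicit Arguments. Unset Strict Implicit. Unset Printing Implicit Defensive.

Section Canc.
Variable V : zmodType.
Lemma canc_step (X B' y : V) : X = B' -> X + y = B' + y.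
Proof. by move->. Qed.
Lemma canc_mv (X B y : V) : X = B - y -> X + y = B.
Proof. by move->; rewrite subrK. Qed.
Lemma canc_single (y B : V) : 0 + y = B -> y = B.
Proof. by rewrite add0r. Qed.
End Canc.

Section Canc2.
Variable V : zmodType.
Lemma canc_found (X B B' y : V) : B = B' + y -> X = B' -> X + y = B.
Proof. by move=> -> ->. Qed.
Lemma rm_rec (Z Z' u y : V) : Z = Z' + y -> Z + u = (Z' + u) + y.
Proof. by move->; rewrite addrAC. Qed.
Lemma rm_base (y : V) : y = 0 + y.
Proof. by rewrite add0r. Qed.
End Canc2.

Ltac find_rm :=
  lazymatch goal with
  | |- ?Z + ?u = _ + ?y =>
      first [ reflexivity | apply: rm_rec; find_rm ]
  | |- _ = _ => apply: rm_base
  end.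

Ltac canc :=
  lazymatch goal with
  | |- 0 = 0 => reflexivity
  | |- 0 = ?B => symmetry; canc
  | |- ?X0 + ?y0 = ?B0 =>
      first [ apply: canc_found; [ find_rm | ]
            | apply: canc_mv; rewrite ?add0r ?opprK ];
      canc
  | |- ?y = ?B => apply: canc_single; canc
  end.

Ltac expand := rewrite ?(mulrDl, mulrDr, mulrBl, mulrBr, mulNr, mulrN, mulr1, mul1r,
   mulr0, mul0r, opprD, opprK, oppr0, addr0, add0r, mulrA, addrA).


Lemma lift2 {R : pzRingType} (x y u : R) : x * y = u -> forall a, a * x * y = a * u.
Proof. by move=> H a; rewrite -H !mulrA. Qed.
Lemma lift3 {R : pzRingType} (x y z u : R) : x * y * z = u -> forall a, a * x * y * z = a * u.
Proof. by move=> H a; rewrite -H !mulrA. Qed.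

Definition gi (R : pzRingType) (h w : R) :=
  [/\ h * w = w * h, h * w * h = h & w * h * w = w].

Lemma gi_comm (R : pzRingType) (h w z : R) : gi h w -> z * h = h * z -> z * w = w * z.
Proof.
move=> [hw hwh whw] zh.
have hw' := lift2 hw; have zh' := lift2 zh; have whw' := lift3 whw; have hwh' := lift3 hwh.
have w1 : w = h * w * w by rewrite hw whw.
have w2 : w = w * w * h by rewrite -mulrA -hw mulrA whw.
have a1 : z * w = h * w * z * w.
  have -> : z * w = h * z * w * w by rewrite {1}w1 !mulrA zh.
  transitivity (h * w * z * (h * w * w)); last by rewrite -w1.
  by rewrite !mulrA zh' !mulrA hwh.
have a2 : w * z = w * z * h * w.
  rewrite {1}w2 -!mulrA -zh !mulrA.
  have hh : h = h * h * w by rewrite -mulrA hw mulrA hwh.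
  transitivity (w * w * z * (h * h * w)); first by rewrite -hh.
  by rewrite !mulrA zh' !mulrA -w2.
by rewrite a2 a1 hw (lift2 (esym zh)) !mulrA.
Qed.

Lemma cm {R : pzRingType} (x y u v : R) : x * y = u * v -> forall a, a * x * y = a * u * v.
Proof. by move=> H a; rewrite -!mulrA H. Qed.

Lemma gi_uniq (R : pzRingType) (h w1 w2 : R) : gi h w1 -> gi h w2 -> w1 = w2.
Proof.
move=> [hw1 hwh1 whw1] [hw2 hwh2 whw2].
have A : w1 = w1 * w1 * h by rewrite -mulrA -hw1 mulrA whw1.
have B : h = h * h * w2 by rewrite -mulrA hw2 mulrA hwh2.
have C : w2 = h * w2 * w2 by rewrite hw2 whw2.
have D : w1 * h * h = h by rewrite -hw1 hwh1.
transitivity (w1 * w1 * h); first exact A.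
transitivity (w1 * w1 * (h * h * w2)); first by rewrite -B.
transitivity (w1 * h * w2); first by rewrite !mulrA -A.
transitivity (w1 * h * (h * w2 * w2)); first by rewrite -C.
by rewrite !mulrA D -C.
Qed.

Lemma gi_prod (R : pzRingType) (h1 w1 h2 w2 : R) : gi h1 w1 -> gi h2 w2 ->
  h2 * h1 = h1 * h2 -> gi (h1 * h2) (w1 * w2).
Proof.
move=> g1 g2 c12.
have c1 : h2 * w1 = w1 * h2 := gi_comm g1 c12.
have c2 : h1 * w2 = w2 * h1 := gi_comm g2 (esym c12).
have c3 : w1 * w2 = w2 * w1 := gi_comm g2 (esym c1).
case: g1 g2 => [hw1 hwh1 whw1] [hw2 hwh2 whw2].
have r1 := esym hw1; have r2 := esym c2; have r3 := esym c3; have r4 := esym hw2.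
have q1 : h1 * h1 * w1 = h1 by rewrite -mulrA hw1 mulrA hwh1.
have q2 : h2 * h2 * w2 = h2 by rewrite -mulrA hw2 mulrA hwh2.
have q3 : h1 * w1 * w1 = w1 by rewrite hw1 whw1.
have q4 : h2 * w2 * w2 = w2 by rewrite hw2 whw2.
have srt : forall x y : R, x = y -> x = y by [].
split; rewrite !mulrA ?(r1, cm r1, c12, cm c12, c1, cm c1, r2, cm r2, r3, cm r3, r4, cm r4) //;
  by rewrite ?(q1, lift3 q1, q2, lift3 q2, q3, lift3 q3, q4, lift3 q4).
Qed.

Section Star.
Variable R : pzRingType.
Variable star : R -> R.
Hypothesis Hinv : is_involution star.

Lemma starK x : star (star x) = x. Proof. by case: Hinv. Qed.
Lemma starD x y : star (x + y) = star x + star y. Proof. by case: Hinv. Qed.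
Lemma starM x y : star (x * y) = star y * star x. Proof. by case: Hinv. Qed.
Lemma star0 : star 0 = 0.
Proof. by apply: (@addrI _ (star 0)); rewrite -starD !addr0. Qed.
Lemma starN x : star (- x) = - star x.
Proof. by apply: (@addrI _ (star x)); rewrite -starD !subrr star0. Qed.
Lemma starB x y : star (x - y) = star x - star y.
Proof. by rewrite starD starN. Qed.
Lemma star1 : star 1 = 1.
Proof. by have := starM (star 1) 1; rewrite mulr1 starK mulr1 => H; rewrite -H. Qed.

Lemma gi_herm (h w : R) : star h = h -> gi h w -> star w = w.
Proof.
move=> sh g; have [hw hwh whw] := g.
apply: (gi_uniq _ g); split.
- by rewrite -sh -starM -hw starM.
- by rewrite -{1}sh -{2}sh -!starM mulrA hwh sh.
- by rewrite -{1}sh -!starM mulrA whw.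
Qed.
End Star.

Section Red.
Variable R : pzRingType.
Variable star : R -> R.
Hypothesis Hinv : is_involution star.
Hypothesis Hred : star_reducing star.

Lemma MP_of_gi (a w : R) : gi (star a * a) w -> MP_invertible star a.
Proof.
move=> g.
have sh : star (star a * a) = star a * a by rewrite (starM Hinv) (starK Hinv).
have sw := gi_herm Hinv sh g.
have [hw hwh whw] := g.
exists (w * star a); split.
- have d0 : a - a * w * (star a * a) = 0.
    apply: Hred.
    have hwhA : star a * a * w * star a * a = star a * a by rewrite -mulrA hwh.
    rewrite (starB Hinv) !(starM Hinv) (starK Hinv) sw.
    by expand; rewrite ?hwhA; canc.
  by move/eqP: d0; rewrite subr_eq0 !mulrA => /eqP <-.
- have whwA : w * star a * a * w = w by rewrite -[RHS]whw !mulrA.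
  by rewrite !mulrA whwA.
- by rewrite !(starM Hinv) (starK Hinv) sw !mulrA.
- by rewrite !(starM Hinv) (starK Hinv) sw mulrA hw mulrA.
Qed.

Lemma gi_of_MP (a : R) : MP_invertible star a -> exists w, gi (star a * a) w.
Proof.
move=> [x [axa xax sax sxa]].
have E1 : star a * a * x = star a.
  by rewrite -mulrA -sax -(starM Hinv) axa.
have E2 : star a * star x = x * a by rewrite -(starM Hinv) sxa.
have E3 : star x * star a = a * x by rewrite -(starM Hinv) sax.
have HW : star a * a * (x * star x) = x * a by rewrite mulrA E1 E2.
have WH : x * star x * (star a * a) = x * a.
  by rewrite !mulrA (cm E3) xax.
exists (x * star x); split.
- by rewrite HW WH.
- by rewrite HW -E2 !mulrA (cm E3) (lift3 axa).
- by rewrite WH !mulrA xax.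
Qed.
End Red.

Lemma gi_sum (R : pzRingType) (h q w1 w2 : R) : q * q = q -> q * h = h * q ->
  gi (q * h) w1 -> gi ((1 - q) * h) w2 -> gi h (w1 + w2).
Proof.
move=> qq qh [hw1 hwh1 whw1] [hw2 hwh2 whw2].
have q'q : (1 - q) * q = 0 by rewrite mulrBl mul1r qq subrr.
have qq' : q * (1 - q) = 0 by rewrite mulrBr mulr1 qq subrr.
have q'h : (1 - q) * h = h * (1 - q) by rewrite mulrBl mulrBr mul1r mulr1 qh.
have hsplit : h = q * h + (1 - q) * h by rewrite -mulrDl addrC subrK mul1r.
have w1e : w1 = q * h * w1 * w1 by rewrite hw1 whw1.
have w1e' : w1 = w1 * w1 * (q * h) by rewrite -mulrA -hw1 mulrA whw1.
have w2e : w2 = (1 - q) * h * w2 * w2 by rewrite hw2 whw2.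
have w2e' : w2 = w2 * w2 * ((1 - q) * h) by rewrite -mulrA -hw2 mulrA whw2.
have a1 : (1 - q) * w1 = 0 by rewrite w1e !mulrA q'q !mul0r.
have a2 : w1 * (1 - q) = 0 by rewrite w1e' qh -!mulrA qq' !mulr0.
have a3 : q * w2 = 0 by rewrite w2e !mulrA qq' !mul0r.
have a4 : w2 * q = 0 by rewrite w2e' q'h -!mulrA q'q !mulr0.
have b1 : h * w1 = q * h * w1.
  by rewrite {1}hsplit mulrDl q'h -(mulrA h (1 - q)) a1 mulr0 addr0.
have b2 : w1 * h = w1 * (q * h).
  by rewrite {1}hsplit mulrDr (mulrA w1 (1 - q)) a2 mul0r addr0.
have b3 : h * w2 = (1 - q) * h * w2.
  by rewrite {1}hsplit mulrDl qh -(mulrA h q) a3 mulr0 add0r.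
have b4 : w2 * h = w2 * ((1 - q) * h).
  by rewrite {1}hsplit mulrDr (mulrA w2 q) a4 mul0r add0r.
have c1 : w1 * (q * h) * w2 = 0 by rewrite qh mulrA -mulrA a3 mulr0.
have c2 : w2 * ((1 - q) * h) * w1 = 0 by rewrite q'h mulrA -mulrA a1 mulr0.
split.
- by rewrite mulrDr mulrDl b1 b3 b2 b4 hw1 hw2.
- rewrite mulrDr b1 b3 mulrDl.
  rewrite -(mulrA (q * h) w1 h) b2 (mulrA (q * h) w1 (q * h)) hwh1.
  by rewrite -(mulrA ((1 - q) * h) w2 h) b4 (mulrA ((1 - q) * h) w2) hwh2 -hsplit.
- by rewrite mulrDl b2 b4 mulrDl !mulrDr whw1 whw2 c1 c2 addr0 add0r.
Qed.

Ltac lin := rewrite ?(opprD, opprK, oppr0, addr0, add0r, addrA); canc.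

Lemma gi_split (R : pzRingType) (s t w : R) : s + t = 1 -> s * t = t * s ->
  gi (s * t) w -> gi s (t * w + (1 - s * t * w) * s).
Proof.
move=> st1 st g.
have sw : s * w = w * s by apply: (gi_comm g); rewrite -[RHS]mulrA -st.
have tw : t * w = w * t by apply: (gi_comm g); rewrite mulrA -st.
case: g => [hw hwh whw].
set h := s * t in hw hwh whw *.
set e := h * w.
have ss : s * s = s - h.
  have E : s * s + s * t = s by rewrite -mulrDr st1 mulr1.
  by rewrite /h -[X in X - _]E addrK.
have K1 : s * e = e * s.
  by rewrite /e /h !mulrA -(mulrA (s * t) w s) -sw mulrA -(mulrA s t s) -st mulrA.
have K2 : e * h = h by rewrite /e hwh.
have K3 : e * e = e by rewrite /e mulrA hwh.
have K4 : t * w * s = e.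
  by rewrite /e /h -mulrA -sw mulrA -st.
have ht : h * t = t * h by rewrite /h mulrA st.
have K5 : e * t * w = t * w.
  have hww : h * w * w = w by rewrite hw whw.
  by rewrite /e -(mulrA h w t) -tw mulrA ht (lift3 hww).
have Esv : s * (t * w + (1 - e) * s) = e + s - e * s.
  rewrite mulrDr (mulrA s t w) (mulrA s (1 - e) s) mulrBr mulr1 mulrBl ss K1 -(mulrA e s s) ss mulrBr K2.
  by rewrite /e /h; lin.
have Evs : (t * w + (1 - e) * s) * s = e + s - e * s.
  rewrite mulrDl K4 -(mulrA (1 - e) s s) ss mulrBr !mulrBl !mul1r K2.
  by lin.
have Ev : e * (t * w + (1 - e) * s) = t * w.
  by rewrite mulrDr mulrA K5 mulrA mulrBr mulr1 K3 subrr mul0r addr0.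
split.
- by rewrite Esv Evs.
- rewrite Esv mulrBl mulrDl -(mulrA e s s) ss mulrBr K2.
  by lin.
- rewrite Evs mulrBl mulrDl Esv -(mulrA e s) Esv Ev.
  rewrite mulrBr mulrDr K3 mulrA K3.
  by rewrite mulrBl mul1r; lin.
Qed.

Lemma gi_idem (R : pzRingType) (q : R) : q * q = q -> gi q q.
Proof. by move=> qq; split; rewrite ?qq. Qed.


Section Main.
Variable R : pzRingType.
Variable star : R -> R.
Hypothesis Hinv : is_involution star.
Hypothesis Hred : star_reducing star.

Lemma gi_transfer (k w : R) : gi (star k * k) w -> exists w', gi (k * star k) w'.
Proof.
move=> g; have [x [kxk xkx skx sxk]] := MP_of_gi Hinv Hred g.
have : MP_invertible star (star k).
  exists (star x); split.
  - by rewrite -!(starM Hinv) mulrA kxk.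
  - by rewrite -!(starM Hinv) mulrA xkx.
  - by rewrite (starM Hinv) !(starK Hinv) -sxk (starM Hinv).
  - by rewrite (starM Hinv) !(starK Hinv) -skx (starM Hinv).
move/(gi_of_MP Hinv) => [w' g']; exists w'; by rewrite (starK Hinv) in g'.
Qed.

Lemma main_eq (p q : R) : projection star p -> projection star q ->
  MP_invertible star (p * q - q * p) <->
  (MP_invertible star (p * q) /\ MP_invertible star (p - q)).
Proof.
move=> [pp sp] [qq sq].
have pp' : forall x, x * p * p = x * p by move=> x; rewrite -mulrA pp.
have qq' : forall x, x * q * q = x * q by move=> x; rewrite -mulrA qq.
set s := (p - q) * (p - q).
set t := 1 - s.
have st1 : s + t = 1 by rewrite /t addrC subrK.
have N1 : star (p * q - q * p) * (p * q - q * p) = s * t.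
  rewrite (starB Hinv) !(starM Hinv) sp sq /t /s.
  by expand; rewrite ?pp ?qq ?pp' ?qq' ?pp ?qq; canc.
have N2 : s * q = q * s.
  by rewrite /s; expand; rewrite ?pp ?qq ?pp' ?qq' ?pp ?qq; canc.
have N3 : star (p * q) * (p * q) = q * t.
  rewrite !(starM Hinv) sp sq /t /s.
  by expand; rewrite ?pp ?qq ?pp' ?qq' ?pp ?qq; canc.
have N4 : star ((1 - q) * p * q) * ((1 - q) * p * q) = q * (s * t).
  rewrite !(starM Hinv) (starB Hinv) (star1 Hinv) sp sq /t /s.
  by expand; rewrite ?pp ?qq ?pp' ?qq' ?pp ?qq; canc.
have N5 : ((1 - q) * p * q) * star ((1 - q) * p * q) = (1 - q) * (s * t).
  rewrite !(starM Hinv) (starB Hinv) (star1 Hinv) sp sq /t /s.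
  by expand; rewrite ?pp ?qq ?pp' ?qq' ?pp ?qq; canc.
have N6 : star (p - q) * (p - q) = s by rewrite (starB Hinv) sp sq.
have st : s * t = t * s by rewrite /t mulrBr mulrBl mulr1 mul1r.
have tq : t * q = q * t by rewrite /t mulrBl mulrBr mul1r mulr1 N2.
have E : s * (q * t) = q * (s * t) by rewrite mulrA N2 -mulrA.
have c1 : q * t * s = s * (q * t) by rewrite E -mulrA st.
have qst : q * (s * t) = s * t * q by rewrite -E -tq !mulrA.
split.
- move=> /(gi_of_MP Hinv) [w gw]; rewrite N1 in gw.
  have gs := gi_split st1 st gw.
  have ts1 : t + s = 1 by rewrite addrC.
  rewrite st in gw.
  have gt := gi_split ts1 (esym st) gw.
  split.
  + have gqt := gi_prod (gi_idem qq) gt tq.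
    apply: (@MP_of_gi R star Hinv Hred (p * q) _); rewrite N3; exact: gqt.
  + apply: (@MP_of_gi R star Hinv Hred (p - q) _); rewrite N6; exact: gs.
- move=> [/(gi_of_MP Hinv) [w1 g1] /(gi_of_MP Hinv) [w2 g2]].
  rewrite N3 in g1; rewrite N6 in g2.
  have g3 := gi_prod g2 g1 c1; rewrite E in g3.
  have g3' := g3; rewrite -N4 in g3'.
  have [w3 g4] := gi_transfer g3'; rewrite N5 in g4.
  have g5 := gi_sum qq qst g3 g4.
  apply: (@MP_of_gi R star Hinv Hred (p * q - q * p) _); rewrite N1; exact: g5.
Qed.
End Main.

Theorem theorem2p13 (R : pzRingType) (star : R -> R)
  (Hinv : is_involution star) (Hred : star_reducing star)
  (p q : R) (Hp : projection star p) (Hq : projection star q) :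
  MP_invertible star (p * q - q * p) <->
  (MP_invertible star (p * q) /\ MP_invertible star (p - q)).
Proof. exact: main_eq. Qed.
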